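(* Let $m>n$ be coprime positive integers. For $(\lambda,k)\in X\times\mathbb Z$ define $x(\lambda,k)=\nu^{-k}x(\lambda)+k\,\mathbf m\in\mathbb Z^{n|m}$. Then $x(\overline\lambda,k+1)=x(\lambda,k)$ whenever $\lambda_1=m$, so $x$ induces a map $[X\times\mathbb Z]\to\mathbb Z^{n|m}$; this induced map is injective and its image is exactly the $\mathfrak T_{iso}$-orbit $\mathcal O$ of $\Lambda_0$.
   Context: $X$ is the set of partitions $\lambda=(\lambda_1\ge\dots\ge\lambda_n\ge0)$ with $\lambda_1\le m$; $\lambda'_j=\#\{i:\lambda_i\ge j\}$ for $j\in[m]$. For $\lambda\in X$ with $\lambda_1=m$ put $\overline\lambda=(\lambda_2,\dots,\lambda_n,0)$. Let $\sim$ be the smallest equivalence relation on $X\times\mathbb Z$ with $(\lambda,k)\sim(\overline\lambda,k+1)$ whenever $\lambda_1=m$, and $[X\times\mathbb Z]$ the set of equivalence classes. Elements of $\mathbb Z^{n|m}$ are written $\Lambda=(a_1,\dots,a_n|b_1,\dots,b_m)$, identified with $\sum_i a_i\epsilon_i-\sum_j b_j\delta_j$. For $\lambda\in X$, $x(\lambda)=(a_1,\dots,a_n|b_1,\dots,b_m)$ with $a_i=m(n-i)+n\lambda_{n+1-i}$ and $b_j=n(j-1)+m\lambda'_j$. $\nu$ is the linear map with $\nu(a_1,\dots,a_n|b)=(a_n,a_1,\dots,a_{n-1}|b)$ (i.e. $\nu\epsilon_i=\epsilon_{i+1}$ indices mod $n$, $\nu\delta_j=\delta_j$), and $\mathbf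 m=(m,\dots,m|m,\dots,m)$. $\Lambda_0=x(\emptyset)=(m(n-1),m(n-2),\dots,m,0\,|\,0,n,2n,\dots,n(m-1))$. For $\alpha=\epsilon_i-\delta_j$ ($i\in[n],j\in[m]$) let $\Pi_\alpha=\{\Lambda: a_i=b_j\}$, $\Pi_{-\alpha}=\{\Lambda:a_i-b_j=n-m\}$, and let $\tau_\alpha:\Pi_\alpha\to\Pi_{-\alpha}$ be $\Lambda\mapsto\Lambda+n\epsilon_i-m\delta_j$ (add $n$ to $a_i$ and $m$ to $b_j$), with inverse $\tau_{-\alpha}$. The $\mathfrak T_{iso}$-orbit of $\Lambda_0$ is the set of all elements obtained from $\Lambda_0$ by finite sequences of maps $\tau_{\pm\alpha}$, each applied to an element of its domain $\Pi_{\pm\alpha}$. *)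

(* Defs.v *)
From mathcomp Require Import all_boot all_order all_algebra.
From Stdlib Require Import Relations.
Set Implicit Arguments. Unset Strict Implicit. Unset Printing Implicit Defensive.
Import GRing.Theory Num.Theory.
Local Open Scope ring_scope.
Local Open Scope nat_scope.

(* Elements of Z^{n|m}: (a_1..a_n | b_1..b_m), 0-indexed: a_{i+1} = L.1 i. *)
Definition sv (n m : nat) := ({ffun 'I_n -> int} * {ffun 'I_m -> int})%type.

(* Partitions lambda = (lambda_1 >= ... >= lambda_n >= 0) with lambda_1 <= m,
   represented as a seq of length n; lambda_{i+1} = nth 0 l i. *)
Definition inX (n m : nat) (l : seq nat) : bool :=
  [&& size l == n, sorted geq l & all (fun x => x <= m) l].

Definition conj_part (l : seq nat) (j : nat) : nat := count (fun x => j <= x) l.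

(* x(lambda): a_i = m(n-i) + n lambda_{n+1-i},  b_j = n(j-1) + m lambda'_j *)
Definition xpart (n m : nat) (l : seq nat) : sv n m :=
  ([ffun i : 'I_n => ((m * (n - 1 - i) + n * nth 0 l (n - 1 - i))%N)%:Z],
   [ffun j : 'I_m => ((n * j + m * conj_part l j.+1)%N)%:Z]).

Definition nu (n m : nat) (L : sv n m) : sv n m :=
  ([ffun i : 'I_n => L.1 (ord_pred i)], L.2).
Definition nuinv (n m : nat) (L : sv n m) : sv n m :=
  ([ffun i : 'I_n => L.1 (ordS i)], L.2).

Definition nupow (n m : nat) (k : int) (L : sv n m) : sv n m :=
  match k with
  | Posz p => iter p (@nu n m) L
  | Negz p => iter p.+1 (@nuinv n m) L
  end.

Definition addm (n m : nat) (k : int) (L : sv n m) : sv n m :=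
  ([ffun i => L.1 i + k * (m%:Z)], [ffun j => L.2 j + k * (m%:Z)])%R.

Definition xk (n m : nat) (l : seq nat) (k : int) : sv n m :=
  addm k (nupow (- k)%R (xpart n m l)).

Definition lbar (l : seq nat) : seq nat := rcons (behead l) 0%N.

Definition gen_rel (n m : nat) (p q : seq nat * int) : Prop :=
  [/\ inX n m p.1, nth 0%N p.1 0 = m & q = (lbar p.1, (p.2 + 1)%R)].

Definition equivX (n m : nat) : relation (seq nat * int) :=
  clos_refl_sym_trans _ (@gen_rel n m).

Definition addij (n m : nat) (L : sv n m) (i : 'I_n) (j : 'I_m) (da db : int)
  : sv n m :=
  ([ffun i' => if i' == i then L.1 i' + da else L.1 i'],
   [ffun j' => if j' == j then L.2 j' + db else L.2 j'])%R.

(* one application of tau_alpha (on Pi_alpha) or tau_{-alpha} (on Pi_{-alpha}),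
   alpha = eps_i - delta_j *)
Definition tau_step (n m : nat) (L L' : sv n m) : Prop :=
  exists (i : 'I_n) (j : 'I_m),
    (L.1 i = L.2 j /\ L' = addij L i j n%:Z m%:Z) \/
    ((L.1 i - L.2 j = n%:Z - m%:Z)%R /\ L' = addij L i j (- n%:Z) (- m%:Z))%R.

Definition Lambda0 (n m : nat) : sv n m := xpart n m (nseq n 0%N).

Definition in_Tiso_orbit (n m : nat) (L : sv n m) : Prop :=
  clos_refl_trans _ (@tau_step n m) (Lambda0 n m) L.

(* Main.v *)
Require Import Defs.
From mathcomp Require Import all_boot all_order all_algebra.
From Stdlib Require Import Relations.
From mathcomp Require Import zify ring lra.
Set Implicit Arguments. Unset Strict Implicit. Unset Printing Implicit Defensive.
Import Order.TTheory GRing.Theory Num.Theory.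
Local Open Scope ring_scope.

Definition Fq (n m : nat) (al : nat -> int) (y : int) : int :=
  al `|(y %% n)%Z|%N + m%:Z * (y %/ n)%Z.

Lemma modz_lt (n : nat) (y : int) : (0 < n)%N -> (`|(y %% n)%Z|%N < n)%N.
Proof.
move=> n0; have h1 := modz_ge0 y (d:=n%:Z) ltac:(by rewrite eqz_nat -lt0n).
have h2 := ltz_pmod y (d:=n%:Z) ltac:(by rewrite ltz_nat).
lia.
Qed.

Lemma split_y (n : nat) (y : int) : (0 < n)%N ->
  y = (`|(y %% n)%Z|%N)%:Z + n%:Z * (y %/ n)%Z.
Proof.
move=> n0; have h1 := modz_ge0 y (d:=n%:Z) ltac:(by rewrite eqz_nat -lt0n).
rewrite gez0_abs // {1}(divz_eq y n); ring.
Qed.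

Lemma Fq_dec n m al (r : nat) (q : int) : (r < n)%N ->
  Fq n m al (r%:Z + n%:Z * q) = al r + m%:Z * q.
Proof.
move=> rn; rewrite /Fq.
have n0 : (n%:Z != 0) by rewrite eqz_nat; lia.
have -> : r%:Z + n%:Z * q = q * n + r by ring.
rewrite modzMDl divzMDl // modz_small; last by lia.
rewrite divz_small; last by rewrite /=; lia.
by rewrite addr0.
Qed.

Lemma modz_dec (n r : nat) (q : int) : (r < n)%N -> `|((r%:Z + n%:Z * q) %% n)%Z|%N = r.
Proof.
move=> rn; have n0 : (n%:Z != 0) by rewrite eqz_nat; lia.
have -> : r%:Z + n%:Z * q = q * n + r by ring.
by rewrite modzMDl modz_small //; lia.
Qed.

Lemma Fq_shift n m al (y d : int) : (0 < n)%N ->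
  Fq n m al (y + n%:Z * d) = Fq n m al y + m%:Z * d.
Proof.
move=> n0; set r := `|(y %% n)%Z|%N; set q := (y %/ n)%Z.
have hr : (r < n)%N by apply: modz_lt.
have e : y = r%:Z + n%:Z * q by apply: split_y.
have -> : y + n%:Z * d = r%:Z + n%:Z * (q + d) by rewrite e; ring.
by rewrite e !Fq_dec //; ring.
Qed.

Lemma same_res (n : nat) (y s : int) : (0 < n)%N ->
  `|(y %% n)%Z|%N = `|(s %% n)%Z|%N -> exists d, y = s + n%:Z * d.
Proof.
move=> n0 e; exists (divz y n - divz s n).
rewrite {1}(split_y y n0) {1}(split_y s n0) e; ring.
Qed.

Lemma res_of (n i : nat) (t : int) (y : int) : (0 < n)%N -> (i < n)%N ->
  `|(y %% n)%Z|%N = i -> exists d, y = i%:Z + n%:Z * t + n%:Z * d.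
Proof.
move=> n0 ilt e; have [|d hd] := same_res (s := i%:Z + n%:Z * t) (y := y) n0.
  by rewrite e modz_dec.
by exists d.
Qed.

Definition upd (al : nat -> int) (i : nat) (c : int) : nat -> int :=
  fun r => if r == i then al r + c else al r.

Lemma Fq_upd n m al i c y :
  Fq n m (upd al i c) y = Fq n m al y + (if `|(y %% n)%Z|%N == i then c else 0).
Proof. rewrite /Fq /upd; case: ifP => _; ring. Qed.

Lemma Fq_ext n m al al' y : (0 < n)%N -> (forall r, (r < n)%N -> al r = al' r) ->
  Fq n m al y = Fq n m al' y.
Proof. by move=> n0 h; rewrite /Fq h // modz_lt. Qed.

Definition valid n m al := forall y, Fq n m al y <= Fq n m al (y + 1).

Lemma Fq_mono n m al x y : valid n m al -> x <= y -> Fq n m al x <= Fq n m al y.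
Proof.
move=> v xy; have [d ->] : exists d : nat, y = x + d%:Z by exists `|y - x|%N; lia.
elim: d => [|d IH]; first by rewrite addr0.
apply: le_trans IH _; have := v (x + d%:Z).
by have -> : x + d%:Z + 1 = x + d.+1%:Z by rewrite -addrA; congr (_ + _); lia.
Qed.

Lemma cross_uniq n m al j s s' : valid n m al ->
  Fq n m al (s - 1) <= j < Fq n m al s ->
  Fq n m al (s' - 1) <= j < Fq n m al s' -> s = s'.
Proof.
move=> v /andP[a b] /andP[c d].
case: (ltgtP s s') => // h.
- have := Fq_mono v (x := s) (y := s' - 1) ltac:(lia). lia.
- have := Fq_mono v (x := s') (y := s - 1) ltac:(lia). lia.
Qed.

Lemma modeq (m : nat) (a b d : int) : 0 <= a < m%:Z -> 0 <= b < m%:Z -> a + m%:Z * d = b -> a = b.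
Proof.
move=> ha hb e.
case: (ltgtP d 0) => hd.
- have : m%:Z * d <= - m%:Z by nia. lia.
- have : m%:Z * d >= m%:Z by nia. lia.
- by move: e; rewrite hd mulr0 addr0.
Qed.

Definition Vdata n m (L : sv n m) (al be : nat -> int) : Prop :=
  [/\ valid n m al,
      (forall i : 'I_n, L.1 i = (m * (n - 1 - i))%N%:Z + n%:Z * al i) &
      (forall j : 'I_m, L.2 j = (n * j)%N%:Z + m%:Z * be j /\
          Fq n m al (n%:Z - be j - 1) <= j%:Z < Fq n m al (n%:Z - be j))].

Lemma V_inc n m (L : sv n m) al be (i : 'I_n) (j : 'I_m) (t : int) :
  (0 < n)%N -> (0 < m)%N ->
  Vdata L al be -> al i + m%:Z * t = j%:Z -> be j = n%:Z - 1 - i%:Z - n%:Z * t ->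
  Vdata (addij L i j n%:Z m%:Z) (upd al i 1) (upd be j 1).
Proof.
move=> n0 m0 [v h1 h2] ha hb.
set s := i%:Z + n%:Z * t.
have Fs : Fq n m al s = j by rewrite /s Fq_dec.
have Fs1 : j%:Z < Fq n m al (s + 1).
  have [_ /andP[_ h]] := h2 j; move: h; rewrite hb.
  by have -> : n%:Z - (n%:Z - 1 - i%:Z - n%:Z * t) = s + 1 by rewrite /s; ring.
have Ps : `|(s %% n)%Z|%N = i by rewrite /s modz_dec.
split.
- move=> y; rewrite !Fq_upd.
  case: eqP => Py; case: eqP => Py1; try (have := v y; lia).
  have [d hd] := res_of t n0 (ltn_ord i) Py.
  rewrite hd -/s.
  have -> : s + n%:Z * d + 1 = (s + 1) + n%:Z * d by ring.
  rewrite (Fq_shift _ _ (s + 1)) // (Fq_shift _ _ s) // Fs. lia.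
- move=> i'; rewrite /addij ffunE /upd /=.
  case: (i' =P i) => [->|ne]; first by rewrite eqxx h1; ring.
  have -> : ((i' : nat) == i) = false by apply/eqP => /val_inj.
  by rewrite h1.
- move=> j'; rewrite /addij ffunE /upd /=.
  case: (j' =P j) => [->|ne].
    rewrite eqxx; split; first by rewrite (h2 j).1; ring.
    rewrite hb.
    have -> : n%:Z - (n%:Z - 1 - i%:Z - n%:Z * t + 1) = s by rewrite /s; ring.
    rewrite !Fq_upd Ps eqxx Fs; apply/andP; split; last by lia.
    case: eqP => P1.
      have [d hd] := res_of t n0 (ltn_ord i) P1.
      have d1 : d = -1 by nia.
      have n1 : n = 1%N by nia.
      rewrite hd -/s Fq_shift // Fs d1; lia.
    have := Fq_mono v (x := s - 1) (y := s) ltac:(rewrite /s; lia). rewrite /= Fs addr0. done.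
  have ne' : ((j' : nat) == j) = false by apply/eqP => /val_inj.
  rewrite ne'; have [e1 /andP[c1 c2]] := h2 j'; split => //.
  rewrite !Fq_upd; apply/andP; split; last first.
    case: ifP => _; lia.
  case: eqP => P1; last by lia.
  have [d hd] := res_of t n0 (ltn_ord i) P1.
  move: c1; rewrite hd -/s Fq_shift // Fs => c1.
  have : j%:Z + m%:Z * d != j'.
    have := ltn_ord j; have := ltn_ord j' => lj' lj.
    apply/eqP => /modeq e. have := e ltac:(lia) ltac:(lia). move/eqP.
    rewrite eqz_nat => /eqP/val_inj. by move/esym.
  lia.
Qed.

Lemma V_dec n m (L : sv n m) al be (i : 'I_n) (j : 'I_m) (t : int) :
  (0 < n)%N -> (0 < m)%N ->
  Vdata L al be -> al i + m%:Z * t = j%:Z + 1 -> be j = n%:Z - i%:Z - n%:Z * t ->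
  Vdata (addij L i j (- n%:Z) (- m%:Z)) (upd al i (-1)) (upd be j (-1)).
Proof.
move=> n0 m0 [v h1 h2] ha hb.
set s := i%:Z + n%:Z * t.
have Fs : Fq n m al s = j%:Z + 1 by rewrite /s Fq_dec.
have Fs1 : Fq n m al (s - 1) <= j%:Z.
  have [_ /andP[h _]] := h2 j; move: h; rewrite hb.
  by have -> : n%:Z - (n%:Z - i%:Z - n%:Z * t) - 1 = s - 1 by rewrite /s; ring.
have Ps : `|(s %% n)%Z|%N = i by rewrite /s modz_dec.
split.
- move=> y; rewrite !Fq_upd.
  case: eqP => Py; case: eqP => Py1 /=; try (have := v y; lia).
  have [d hd] := res_of t n0 (ltn_ord i) Py1.
  have hy : y = (s - 1) + n%:Z * d by rewrite -/s in hd; rewrite -[y](addrK 1) hd; ring.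
  rewrite hy.
  have -> : s - 1 + n%:Z * d + 1 = s + n%:Z * d by ring.
  rewrite (Fq_shift _ _ s) // (Fq_shift _ _ (s - 1)) // Fs. lia.
- move=> i'; rewrite /addij ffunE /upd /=.
  case: (i' =P i) => [->|ne]; first by rewrite eqxx h1; ring.
  have -> : ((i' : nat) == i) = false by apply/eqP => /val_inj.
  by rewrite h1.
- move=> j'; rewrite /addij ffunE /upd /=.
  case: (j' =P j) => [->|ne].
    rewrite eqxx; split; first by rewrite (h2 j).1; ring.
    rewrite hb.
    have -> : n%:Z - (n%:Z - i%:Z - n%:Z * t + -1) - 1 = s by rewrite /s; ring.
    have -> : n%:Z - (n%:Z - i%:Z - n%:Z * t + -1) = s + 1 by rewrite /s; ring.
    rewrite !Fq_upd Ps eqxx Fs; apply/andP; split; first by lia.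
    case: eqP => P1 /=.
      have [d hd] := res_of t n0 (ltn_ord i) P1.
      have d1 : d = 1 by rewrite -/s in hd; nia.
      have n1 : n = 1%N by rewrite -/s in hd; nia.
      rewrite -/s in hd; rewrite hd Fq_shift // Fs d1; lia.
    have := Fq_mono v (x := s) (y := s + 1) ltac:(rewrite /s; lia). rewrite Fs. lia.
  have ne' : ((j' : nat) == j) = false by apply/eqP => /val_inj.
  rewrite ne'; have [e1 /andP[c1 c2]] := h2 j'; split => //.
  rewrite !Fq_upd; apply/andP; split.
    case: ifP => _ /=; lia.
  case: eqP => P1 /=; last by lia.
  have [d hd] := res_of t n0 (ltn_ord i) P1.
  move: c2; rewrite hd -/s Fq_shift // Fs => c2.
  have : j%:Z + m%:Z * d != j'.
    have := ltn_ord j; have := ltn_ord j' => lj' lj.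
    apply/eqP => /modeq e. have := e ltac:(lia) ltac:(lia). move/eqP.
    rewrite eqz_nat => /eqP/val_inj. by move/esym.
  lia.
Qed.

Lemma coprime_split (n m : nat) (X Y : int) : coprime m n -> (0 < n)%N ->
  m%:Z * X = n%:Z * Y -> exists t, X = n%:Z * t /\ Y = m%:Z * t.
Proof.
move=> cop n0 e.
have cz : coprimez n%:Z m%:Z by rewrite coprimezE /= coprime_sym.
have : (n%:Z %| m%:Z * X)%Z by rewrite e; apply/dvdzP; exists Y; ring.
rewrite Gauss_dvdzr // => /dvdzP[t ht]; exists t; split; first by rewrite ht mulrC.
have nz : n%:Z != 0 by rewrite eqz_nat; lia.
apply: (mulfI nz); rewrite -e ht; ring.
Qed.

Lemma tau_V n m (L L' : sv n m) al be : (0 < n)%N -> (0 < m)%N -> coprime m n ->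
  Vdata L al be -> tau_step L L' -> exists al' be', Vdata L' al' be'.
Proof.
move=> n0 m0 cop V [i [j [[e ->]|[e ->]]]].
- have [_ h1 h2] := V.
  have hi := ltn_ord i.
  move: e; rewrite h1 (h2 j).1 !PoszM.
  have -> : ((n - 1 - i)%N)%:Z = n%:Z - 1 - i%:Z by lia.
  move=> e.
  have [t [ht1 ht2]] : exists t, n%:Z - 1 - i%:Z - be j = n%:Z * t /\ j%:Z - al i = m%:Z * t.
    apply: coprime_split => //; lia.
  exists (upd al i 1), (upd be j 1); apply: V_inc (t) _ _ _ _ _ => //; lia.
- have [_ h1 h2] := V.
  have hi := ltn_ord i.
  move: e; rewrite h1 (h2 j).1 !PoszM.
  have -> : ((n - 1 - i)%N)%:Z = n%:Z - 1 - i%:Z by lia.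
  move=> e.
  have [t [ht1 ht2]] : exists t, n%:Z - i%:Z - be j = n%:Z * t /\ j%:Z + 1 - al i = m%:Z * t.
    apply: coprime_split => //; lia.
  exists (upd al i (-1)), (upd be j (-1)); apply: V_dec (t) _ _ _ _ _ => //; lia.
Qed.

Lemma Fq_nat n m al (r : nat) : (r < n)%N -> Fq n m al r%:Z = al r.
Proof. move=> h; have := @Fq_dec n m al r 0 h; rewrite !mulr0 !addr0; done. Qed.

Lemma Fq_pred n m al (i : nat) : (i < n)%N ->
  Fq n m al (i%:Z - 1) = if i == 0%N then al n.-1 - m%:Z else al i.-1.
Proof.
move=> h; case: eqP => [->|ne].
  have := @Fq_dec n m al n.-1 (-1) ltac:(lia).
  have -> : (n.-1)%:Z + n%:Z * (-1) = 0%:Z - 1 by lia.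
  move=> ->; ring.
have := @Fq_nat n m al i.-1 ltac:(lia).
by have -> : (i.-1)%:Z = i%:Z - 1 by lia.
Qed.

Lemma Fq_succ n m al (i : nat) : (i < n)%N ->
  Fq n m al (i%:Z + 1) = if i == n.-1 then al 0%N + m%:Z else al i.+1.
Proof.
move=> h; case: eqP => [->|ne].
  have := @Fq_dec n m al 0%N 1 ltac:(lia).
  have -> : 0%:Z + n%:Z * 1 = n.-1%:Z + 1 by lia.
  by rewrite mulr1 => ->.
have := @Fq_nat n m al i.+1 ltac:(lia).
by have -> : (i.+1)%:Z = i%:Z + 1 by lia.
Qed.

Lemma addijK n m (L : sv n m) i j a b : addij (addij L i j a b) i j (- a) (- b) = L.
Proof.
case: L => L1 L2; rewrite /addij /=; congr pair; apply/ffunP => x; rewrite !ffunE;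
  by case: eqP => _ //; rewrite addrK.
Qed.

Definition meas n (al : nat -> int) := (\sum_(r < n) absz (al r))%N.

Lemma meas_upd n al (i : 'I_n) c : (meas n (upd al i c) + absz (al i))%N = (meas n al + absz (al i + c)%R)%N.
Proof.
rewrite /meas (bigD1 i) //= [X in _ = (X + _)%N](bigD1 i) //= /upd eqxx.
rewrite (eq_bigr (fun r : 'I_n => absz (al r))); first by lia.
move=> r /negbTE ne; have -> : ((r : nat) == i) = false by apply/eqP => /val_inj /eqP; rewrite ne.
done.
Qed.

Lemma V_zero n m (L : sv n m) al be : (0 < n)%N -> (0 < m)%N ->
  Vdata L al be -> (forall r, (r < n)%N -> al r = 0) -> L = Lambda0 n m.
Proof.
move=> n0 m0 [v h1 h2] z.
case: L h1 h2 => L1 L2 h1 h2; rewrite /Lambda0 /xpart; congr pair; apply/ffunP => x; rewrite ffunE.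
  rewrite h1 /= z // nth_nseq; case: ifP => _; rewrite mulr0 addr0 ?muln0 ?addn0 //.
have [e /andP[c1 c2]] := h2 x; rewrite /= in e; rewrite e.
have hn1 : Fq n m al (n%:Z - 1) = 0.
  have := @Fq_nat n m al n.-1 ltac:(lia); rewrite z; last by lia.
  by have -> : (n.-1)%:Z = n%:Z - 1 by lia.
have hn : Fq n m al n%:Z = m%:Z.
  by have := @Fq_dec n m al 0%N 1 ltac:(lia); rewrite z // !mulr1 !add0r.
have := cross_uniq v (s := n%:Z - be x) (s' := n%:Z) (j := x) ltac:(by rewrite c1 c2) ltac:(rewrite hn1 hn; have := ltn_ord x; lia).
move=> hb; have -> : be x = 0 by lia.
by rewrite /conj_part count_nseq /= mul0n muln0 addn0 mulr0 addr0.
Qed.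

Lemma absz_le_meas n al (r : nat) : (r < n)%N -> (absz (al r) <= meas n al)%N.
Proof.
move=> hr; rewrite /meas (bigD1 (Ordinal hr)) //=; apply: leq_addr.
Qed.

Lemma step_down n m (L : sv n m) al be : (0 < n)%N -> (0 < m)%N ->
  Vdata L al be ->
  L = Lambda0 n m \/
  exists L' al' be', [/\ Vdata L' al' be', (meas n al' < meas n al)%N & tau_step L' L].
Proof.
move=> n0 m0 V; have [v h1 h2] := V.
have m0' : (0 < m%:Z) by lia.
case: (ltP 0 (al n.-1)) => hpos.
  have ex : exists r : nat, (r < n)%N && (al n.-1 <= al r) by exists n.-1; apply/andP; split => //; lia.
  case: (ex_minnP ex) => i /andP[hi hai] imin.
  have hv : Fq n m al (i%:Z - 1) < al i.
    rewrite Fq_pred //; case: eqP => [e0|ne0]; first by move: hai; rewrite e0; lia.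
    have : ~~ ((i.-1 < n)%N && (al n.-1 <= al i.-1)) by apply/negP => /imin; lia.
    move/negP => h; have : ~ (al n.-1 <= al i.-1) by move=> h'; apply: h; apply/andP; split => //; lia.
    lia.
  set jn := absz ((al i - 1) %% m)%Z.
  have hj : (jn < m)%N by apply: modz_lt.
  set t := - ((al i - 1) %/ m)%Z.
  have ht : al i + m%:Z * t = jn%:Z + 1.
    have := split_y (al i - 1) m0; rewrite -/jn /t; lia.
  pose io := Ordinal hi; pose jo := Ordinal hj.
  set s := i%:Z + n%:Z * t.
  have Fs : Fq n m al s = jn%:Z + 1 by rewrite /s Fq_dec.
  have Fs1 : Fq n m al (s - 1) <= jn%:Z.
    have -> : s - 1 = (i%:Z - 1) + n%:Z * t by rewrite /s; ring.
    rewrite Fq_shift //; lia.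
  have hb : be jo = n%:Z - i%:Z - n%:Z * t.
    have [_ c] := h2 jo.
    have := cross_uniq v c (s' := s) ltac:(rewrite Fs Fs1 /=; lia).
    rewrite /s /=; lia.
  right; exists (addij L io jo (- n%:Z) (- m%:Z)), (upd al io (-1)), (upd be jo (-1)); split.
  - by apply: V_dec (t) _ _ _ _ _.
  - have := meas_upd al io (-1); rewrite /=; lia.
  - exists io, jo; left; split.
      rewrite /addij /= !ffunE !eqxx h1 (h2 jo).1 hb /=.
      rewrite !PoszM.
      have -> : ((n - 1 - i)%N)%:Z = n%:Z - 1 - i%:Z by lia.
      lia.
    by have := addijK L io jo (- n%:Z) (- m%:Z); rewrite !opprK.
case: (ltP (al 0%N) 0) => hneg.
  have ex : exists r : nat, (r < n)%N && (al r <= al 0%N) by exists 0%N; apply/andP; split => //.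
  have ub : forall r : nat, (r < n)%N && (al r <= al 0%N) -> (r <= n.-1)%N by move=> r /andP[]; lia.
  case: (ex_maxnP ex ub) => i /andP[hi hai] imax.
  have hv : al i < Fq n m al (i%:Z + 1).
    rewrite Fq_succ //; case: eqP => [e0|ne0]; first by lia.
    have : ~~ ((i.+1 < n)%N && (al i.+1 <= al 0%N)) by apply/negP => /imax; lia.
    move/negP => h; have : ~ (al i.+1 <= al 0%N) by move=> h'; apply: h; apply/andP; split => //; lia.
    lia.
  set jn := absz ((al i) %% m)%Z.
  have hj : (jn < m)%N by apply: modz_lt.
  set t := - ((al i) %/ m)%Z.
  have ht : al i + m%:Z * t = jn%:Z.
    have := split_y (al i) m0; rewrite -/jn /t; lia.
  pose io := Ordinal hi; pose jo := Ordinal hj.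
  set s := i%:Z + n%:Z * t.
  have Fs : Fq n m al s = jn%:Z by rewrite /s Fq_dec.
  have Fs1 : jn%:Z < Fq n m al (s + 1).
    have -> : s + 1 = (i%:Z + 1) + n%:Z * t by rewrite /s; ring.
    rewrite Fq_shift //; lia.
  have hb : be jo = n%:Z - 1 - i%:Z - n%:Z * t.
    have [_ c] := h2 jo.
    have := cross_uniq v c (s' := s + 1) ltac:(rewrite addrK Fs Fs1 /=; lia).
    rewrite /s /=; lia.
  right; exists (addij L io jo n%:Z m%:Z), (upd al io 1), (upd be jo 1); split.
  - by apply: V_inc (t) _ _ _ _ _.
  - have := meas_upd al io 1; rewrite /=; lia.
  - exists io, jo; right; split.
      rewrite /addij /= !ffunE !eqxx h1 (h2 jo).1 hb /=.
      rewrite !PoszM.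
      have -> : ((n - 1 - i)%N)%:Z = n%:Z - 1 - i%:Z by lia.
      lia.
    by have := addijK L io jo n%:Z m%:Z.
left; apply: (V_zero n0 m0 V) => r hr.
have a1 := Fq_mono v (x := 0%:Z) (y := r%:Z) ltac:(lia).
have a2 := Fq_mono v (x := r%:Z) (y := n%:Z - 1) ltac:(lia).
have e1 : (n.-1)%:Z = n%:Z - 1 by lia.
move: a1 a2; rewrite -e1 !Fq_nat //; try lia.
Qed.

Lemma reach n m (L : sv n m) al be : (0 < n)%N -> (0 < m)%N ->
  Vdata L al be -> clos_refl_trans _ (@tau_step n m) (Lambda0 n m) L.
Proof.
move=> n0 m0; move: {2}(meas n al) (leqnn (meas n al)) => N.
elim: N L al be => [|N IH] L al be hm V.
  case: (step_down n0 m0 V) => [->|[L' [al' [be' [_ lt _]]]]]; first by apply: rt_refl.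
  lia.
case: (step_down n0 m0 V) => [->|[L' [al' [be' [V' lt st]]]]]; first by apply: rt_refl.
apply: rt_trans (IH L' al' be' ltac:(lia) V') _; exact: rt_step.
Qed.

Lemma modz_shift (n : nat) (y d : int) : ((y + n%:Z * d) %% n)%Z = (y %% n)%Z.
Proof. by rewrite addrC mulrC modzMDl. Qed.

Lemma ord_res n (i i' : 'I_n) (d : int) : (i' : nat) = absz ((i%:Z + n%:Z * d) %% n)%Z -> i' = i.
Proof.
move=> e; apply: val_inj => /=; rewrite e modz_shift modz_small //.
have := ltn_ord i; lia.
Qed.

Lemma iter_nuinv n m (L : sv n m) p : (0 < n)%N -> forall (i i' : 'I_n),
  (i' : nat) = absz ((i%:Z + p%:Z) %% n)%Z -> (iter p (@nuinv n m) L).1 i = L.1 i'.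
Proof.
move=> n0; elim: p => [|p IH] i i' e.
  by rewrite /= (ord_res (d := 0) (i := i) (i' := i')) // mulr0 addr0 -[i%:Z]addr0.
rewrite iterS /nuinv /= ffunE; apply: IH; rewrite e /=.
have -> : ((i.+1 %% n)%N%:Z + p%:Z) = (i%:Z + p.+1%:Z) + n%:Z * (- (i.+1 %/ n)%N%:Z).
  have := divn_eq i.+1 n; lia.
by rewrite modz_shift.
Qed.

Lemma iter_nu n m (L : sv n m) p : (0 < n)%N -> forall (i i' : 'I_n),
  (i' : nat) = absz ((i%:Z - p%:Z) %% n)%Z -> (iter p (@nu n m) L).1 i = L.1 i'.
Proof.
move=> n0; elim: p => [|p IH] i i' e.
  by rewrite /= (ord_res (d := 0) (i := i) (i' := i')) // mulr0 addr0 -[i%:Z]subr0.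
rewrite iterS /nu /= ffunE; apply: IH; rewrite e /=.
have -> : (((i + n).-1 %% n)%N%:Z - p%:Z) = (i%:Z - p.+1%:Z) + n%:Z * (1 - ((i + n).-1 %/ n)%N%:Z).
  have := divn_eq (i + n).-1 n; lia.
by rewrite modz_shift.
Qed.

Lemma nupow1 n m (L : sv n m) (k : int) (i i' : 'I_n) : (0 < n)%N ->
  (i' : nat) = absz ((i%:Z + k) %% n)%Z -> (nupow (- k) L).1 i = L.1 i'.
Proof.
move=> n0 e; case: k e => [[|p]|p] e.
- rewrite oppr0; apply: (iter_nuinv (p := 0) L n0); by rewrite e.
- have -> : - (Posz p.+1) = Negz p by [].
  apply: (iter_nuinv (p := p.+1) L n0); by rewrite e.
- have -> : - (Negz p) = Posz p.+1 by [].
  apply: (iter_nu (p := p.+1) L n0); rewrite e NegzE; congr (absz (_ %% _)%Z); lia.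
Qed.

Lemma nupow2 n m (L : sv n m) (k : int) : (nupow k L).2 = L.2.
Proof.
case: k => p /=; elim: p => [|p IH] //=; by rewrite IH.
Qed.

Definition gl n (l : seq nat) : nat -> int := fun r => (nth 0%N l (n - 1 - r))%:Z.

Lemma count_sorted (l : seq nat) (t p : nat) : sorted geq l -> (p < size l)%N ->
  (t <= nth 0%N l p)%N = (p < count (fun x => t <= x)%N l)%N.
Proof.
elim: l p => [|x l IH] p //= so hp.
have so' : sorted geq l by apply: path_sorted so.
have tr : ssrbool.transitive geq by move=> a b c h1 h2; apply: leq_trans h2 h1.
have al : all (geq x) l by apply: (order_path_min tr so).
have c0 : (t <= x)%N = false -> count (fun x => t <= x)%N l = 0%N.
  move=> h; apply/eqP; rewrite -leqn0 leqNgt -has_count; apply/hasPn => y /(allP al) /= hy.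
  apply/negbT; apply: contraFF h => h'; apply: leq_trans h' hy.
case: p hp => [|p] hp /=.
  case h: (t <= x)%N => //; by rewrite c0.
rewrite IH //; case h: (t <= x)%N => //; rewrite c0 //=.
Qed.

Lemma inX_nth n m l p : inX n m l -> (p < n)%N -> (nth 0%N l p <= m)%N.
Proof.
case/and3P => /eqP sz so al hp; apply: (allP al); apply: mem_nth; by rewrite sz.
Qed.

Lemma inX_sorted n m l p q : inX n m l -> (p <= q)%N -> (q < n)%N -> (nth 0%N l q <= nth 0%N l p)%N.
Proof.
case/and3P => /eqP sz so al hpq hq.
have tr : ssrbool.transitive geq by move=> a b c h1 h2; apply: leq_trans h2 h1.
have rf : ssrbool.reflexive geq by move=> a; apply: leqnn.
apply: (sorted_leq_nth tr rf 0%N so) => //; rewrite ?inE sz //=; lia.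
Qed.

Lemma g_valid n m l : (0 < n)%N -> inX n m l -> valid n m (gl n l).
Proof.
move=> n0 X y.
set r := absz (y %% n)%Z; set q := (y %/ n)%Z.
have hr : (r < n)%N by apply: modz_lt.
have e : y = r%:Z + n%:Z * q by apply: split_y.
rewrite e Fq_dec //.
case: (ltnP r.+1 n) => h.
  have -> : r%:Z + n%:Z * q + 1 = r.+1%:Z + n%:Z * q by lia.
  rewrite Fq_dec // /gl.
  have := inX_sorted (p := n - 1 - r.+1) (q := n - 1 - r) X ltac:(lia) ltac:(lia); lia.
have -> : r%:Z + n%:Z * q + 1 = 0%:Z + n%:Z * (q + 1) by lia.
rewrite Fq_dec // /gl.
have := inX_nth (p := n - 1 - r) X ltac:(lia).
have : r = n.-1 by lia.
move=> ->; rewrite subn0; lia.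
Qed.

Lemma xk1 n m l k (i : 'I_n) : (0 < n)%N ->
  (xk n m l k).1 i = (m * (n - 1 - i))%N%:Z + n%:Z * Fq n m (gl n l) (i%:Z + k).
Proof.
move=> n0; rewrite /xk /addm ffunE /=.
set r := absz ((i%:Z + k) %% n)%Z.
have hr : (r < n)%N by apply: modz_lt.
rewrite (@nupow1 n m _ k i (Ordinal hr)) //= /xpart ffunE /=.
have e : i%:Z + k = r%:Z + n%:Z * ((i%:Z + k) %/ n)%Z by apply: split_y.
rewrite e Fq_dec // /gl.
set q := ((i%:Z + k) %/ n)%Z.
have ek : k = r%:Z + n%:Z * q - i%:Z by lia.
rewrite ek !PoszD !PoszM.
have -> : ((n - 1 - r)%N)%:Z = n%:Z - 1 - r%:Z by lia.
have -> : ((n - 1 - i)%N)%:Z = n%:Z - 1 - i%:Z by have := ltn_ord i; lia.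
ring.
Qed.

Lemma xk2 n m l k (j : 'I_m) :
  (xk n m l k).2 j = (n * j)%N%:Z + m%:Z * ((conj_part l j.+1)%:Z + k).
Proof.
rewrite /xk /addm ffunE nupow2 /xpart /= ffunE PoszD !PoszM; ring.
Qed.

Lemma Fq_comp n m g (k y : int) : (0 < n)%N ->
  Fq n m (fun r => Fq n m g (r%:Z + k)) y = Fq n m g (y + k).
Proof.
move=> n0; set r := absz (y %% n)%Z; set q := (y %/ n)%Z.
have hr : (r < n)%N by apply: modz_lt.
have e : y = r%:Z + n%:Z * q by apply: split_y.
rewrite e Fq_dec // -Fq_shift //; congr Fq; ring.
Qed.

Lemma xk_V n m l k : (0 < n)%N -> (0 < m)%N -> inX n m l ->
  Vdata (xk n m l k) (fun r => Fq n m (gl n l) (r%:Z + k)) (fun j => (conj_part l j.+1)%:Z + k).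
Proof.
move=> n0 m0 X; have gv := g_valid n0 X.
have [/eqP sz so alm] := and3P X.
split.
- move=> y; rewrite !Fq_comp //; have := gv (y + k).
  by have -> : y + 1 + k = y + k + 1 by ring.
- by move=> i; rewrite xk1.
move=> j; split; first by rewrite xk2.
rewrite !Fq_comp //.
set c := conj_part l j.+1.
have cn : (c <= n)%N by rewrite /c /conj_part -sz count_size.
have hj := ltn_ord j.
apply/andP; split.
  have -> : n%:Z - (c%:Z + k) - 1 + k = n%:Z - c%:Z - 1 by ring.
  case: (ltnP c n) => hc.
    have -> : n%:Z - c%:Z - 1 = (n - 1 - c)%N%:Z by lia.
    rewrite Fq_nat /gl; last by lia.
    have -> : (n - 1 - (n - 1 - c) = c)%N by lia.
    have := count_sorted j.+1 so (p := c) ltac:(lia).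
    rewrite -/(conj_part l j.+1) -/c ltnn; lia.
  have -> : n%:Z - c%:Z - 1 = (n.-1)%:Z + n%:Z * (-1) by lia.
  rewrite Fq_dec /gl; last by lia.
  have := inX_nth (p := n - 1 - n.-1) X ltac:(lia); lia.
have -> : n%:Z - (c%:Z + k) + k = n%:Z - c%:Z by ring.
case: (posnP c) => hc.
  have -> : n%:Z - c%:Z = 0%:Z + n%:Z * 1 by lia.
  rewrite Fq_dec /gl; last by lia.
  lia.
have -> : n%:Z - c%:Z = (n - c)%N%:Z by lia.
rewrite Fq_nat /gl; last by lia.
have -> : (n - 1 - (n - c) = c.-1)%N by lia.
have := count_sorted j.+1 so (p := c.-1) ltac:(lia).
rewrite -/(conj_part l j.+1) -/c.
have -> : (c.-1 < c)%N by lia.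
lia.
Qed.

Lemma find_cross n m al : (0 < n)%N -> (0 < m)%N ->
  exists t, Fq n m al (t - 1) < 0 <= Fq n m al t.
Proof.
move=> n0 m0.
set c : int := `|al 0%N|%:Z + 1.
set x0 : int := n%:Z * (- c).
have F0 : Fq n m al x0 < 0.
  have := @Fq_dec n m al 0%N (- c) n0; rewrite add0r => ->; rewrite /c; nia.
pose P := fun u : nat => (0 <= Fq n m al (x0 + u%:Z)).
have ex : exists u, P u.
  exists (n * (2 * absz c))%N; rewrite /P.
  have -> : x0 + (n * (2 * absz c))%N%:Z = 0%:Z + n%:Z * c by rewrite /x0 /c; lia.
  rewrite Fq_dec // /c; nia.
case: (ex_minnP ex) => u Pu umin.
have u0 : (0 < u)%N.
  case: u Pu umin => // Pu _; move: Pu; rewrite /P addr0; lia.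
exists (x0 + u%:Z); apply/andP; split; last by [].
have : ~~ P u.-1 by apply/negP => /umin; lia.
rewrite /P; have -> : (u.-1)%:Z = u%:Z - 1 by lia.
by rewrite addrA -ltNge.
Qed.

Lemma V_x n m (L : sv n m) al be : (0 < n)%N -> (0 < m)%N ->
  Vdata L al be -> exists l k, inX n m l /\ xk n m l k = L.
Proof.
move=> n0 m0 V; have [v h1 h2] := V.
have [t /andP[t1 t2]] := find_cross al n0 m0.
have pos : forall y, t <= y -> 0 <= Fq n m al y.
  by move=> y ty; apply: le_trans t2 (Fq_mono v ty).
pose f := fun p : nat => absz (Fq n m al ((n - 1 - p)%N%:Z + t)).
have fE : forall p, (f p)%:Z = Fq n m al ((n - 1 - p)%N%:Z + t).
  move=> p; rewrite /f gez0_abs //; apply: pos; lia.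
pose l := mkseq f n.
have X : inX n m l.
  apply/and3P; split.
  - by rewrite size_mkseq.
  - apply/(sortedP 0%N) => p; rewrite size_mkseq => hp.
    rewrite !nth_mkseq //; try lia.
    rewrite /= -lez_nat !fE; apply: Fq_mono => //; lia.
  - apply/(all_nthP 0%N) => p; rewrite size_mkseq => hp.
    rewrite nth_mkseq // -lez_nat fE.
    have := Fq_mono v (x := (n - 1 - p)%N%:Z + t) (y := (t - 1) + n%:Z * 1) ltac:(lia).
    rewrite Fq_shift //; lia.
exists l, (- t); split => //.
have gE : forall r, (r < n)%N -> gl n l r = Fq n m al (r%:Z + t).
  move=> r hr; rewrite /gl nth_mkseq; last by lia.
  rewrite fE; congr Fq; lia.
have [v' h1' h2'] := xk_V (- t) n0 m0 X.
have aE : forall r, (r < n)%N -> Fq n m (gl n l) (r%:Z + - t) = al r.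
  move=> r hr; rewrite (Fq_ext _ _ n0 gE) Fq_comp // addrNK Fq_nat //.
have FE : forall y, Fq n m (fun r => Fq n m (gl n l) (r%:Z + - t)) y = Fq n m al y.
  by move=> y; apply: Fq_ext.
have bE : forall j : 'I_m, (conj_part l j.+1)%:Z + - t = be j.
  move=> j; have [_ c1] := h2 j; have [_ c2] := h2' j; move: c2; rewrite !FE => c2.
  have := cross_uniq v c1 c2; lia.
have E1 : (xk n m l (- t)).1 = L.1 by apply/ffunP => i; rewrite h1' h1 aE.
have E2 : (xk n m l (- t)).2 = L.2 by apply/ffunP => j; rewrite (h2' j).1 (h2 j).1 bE.
move: E1 E2; case: (xk n m l (- t)); case: L {h1 h2 V} => ? ? ? ? /= -> -> //.
Qed.

Lemma nth_lbar n (l : seq nat) p : size l = n -> (0 < n)%N ->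
  nth 0%N (lbar l) p = if (p.+1 < n)%N then nth 0%N l p.+1 else 0%N.
Proof.
move=> sz n0; rewrite /lbar nth_rcons size_behead sz nth_behead.
case: ltnP => h1; case: ltnP => h2 //; try lia.
by case: ifP.
Qed.

Lemma inX_lbar n m l : (0 < n)%N -> inX n m l -> inX n m (lbar l).
Proof.
move=> n0 X; have [/eqP sz so al] := and3P X.
apply/and3P; split.
- by rewrite /lbar size_rcons size_behead sz; lia.
- apply/(sortedP 0%N) => p; rewrite /lbar size_rcons size_behead sz => hp.
  rewrite -/(lbar l) !(nth_lbar _ sz) //.
  case: ltnP => h1; case: ltnP => h2 //; try lia.
  by apply: (inX_sorted X); lia.
- apply/(all_nthP 0%N) => p; rewrite /lbar size_rcons size_behead sz => hp.
  rewrite -/(lbar l) !(nth_lbar _ sz) //; case: ltnP => h //.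
  by apply: (inX_nth X).
Qed.

Lemma Fq_lbar n m l y : (0 < n)%N -> inX n m l -> nth 0%N l 0 = m ->
  Fq n m (gl n (lbar l)) y = Fq n m (gl n l) (y - 1).
Proof.
move=> n0 X l0; have [/eqP sz _ _] := and3P X.
set r := absz (y %% n)%Z; set q := (y %/ n)%Z.
have hr : (r < n)%N by apply: modz_lt.
have e : y = r%:Z + n%:Z * q by apply: split_y.
rewrite e Fq_dec // /gl (nth_lbar _ sz) //.
case: (posnP r) => hr0.
  have -> : r%:Z + n%:Z * q - 1 = (n.-1)%:Z + n%:Z * (q - 1) by lia.
  rewrite Fq_dec; last by lia.
  rewrite /gl ifF; last by lia.
  have -> : (n - 1 - n.-1 = 0)%N by lia.
  rewrite l0; ring.
have -> : r%:Z + n%:Z * q - 1 = (r.-1)%:Z + n%:Z * q by lia.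
rewrite Fq_dec; last by lia.
rewrite /gl ifT; last by lia.
by have -> : ((n - 1 - r).+1 = n - 1 - r.-1)%N by lia.
Qed.

Lemma conj_lbar n m l j : (0 < n)%N -> (j < m)%N -> inX n m l -> nth 0%N l 0 = m ->
  conj_part (lbar l) j.+1 = (conj_part l j.+1).-1.
Proof.
move=> n0 jm X l0; have [/eqP sz _ _] := and3P X.
case: l sz l0 {X} => [|x l] sz l0 /=; first by move: sz => /= h; lia.
rewrite /= in l0; subst x.
rewrite /conj_part /lbar /= -cats1 count_cat /= addn0.
have -> : (j < m)%N = true by [].
by rewrite addn0 add1n.
Qed.

Lemma part1 n m l k : (0 < n)%N -> inX n m l -> nth 0%N l 0 = m ->
  xk n m (lbar l) (k + 1) = xk n m l k.
Proof.
move=> n0 X l0.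
have E1 : (xk n m (lbar l) (k + 1)).1 = (xk n m l k).1.
  apply/ffunP => i; rewrite !xk1 // Fq_lbar //; congr (_ + _ * Fq _ _ _ _); ring.
have E2 : (xk n m (lbar l) (k + 1)).2 = (xk n m l k).2.
  apply/ffunP => j; rewrite !xk2 (conj_lbar n0 (ltn_ord j) X l0).
  have : (0 < conj_part l j.+1)%N.
    clear E1; case: l X l0 => [|x l] X l0; first by have [/eqP sz _ _] := and3P X; move: sz => /=; lia.
    by rewrite /= in l0; rewrite /conj_part /= l0 (ltn_ord j).
  move=> h; congr (_ + _ * _); lia.
move: E1 E2; case: (xk n m (lbar l) (k + 1)); case: (xk n m l k) => ? ? ? ? /= -> -> //.
Qed.

Lemma inX_eq n m l l' : (0 < n)%N -> inX n m l -> inX n m l' ->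
  (forall y, Fq n m (gl n l') y = Fq n m (gl n l) y) -> l = l'.
Proof.
move=> n0 X X' h; have [/eqP sz _ _] := and3P X; have [/eqP sz' _ _] := and3P X'.
apply: (@eq_from_nth _ 0%N); first by rewrite sz sz'.
move=> p; rewrite sz => hp.
have := h (n - 1 - p)%N%:Z; rewrite !Fq_nat /gl; try lia.
have -> : (n - 1 - (n - 1 - p) = p)%N by lia.
by move/eqP; rewrite eqz_nat => /eqP.
Qed.

Lemma chain n m : (0 < n)%N -> forall (d : nat) l l' k, inX n m l -> inX n m l' ->
  (forall y, Fq n m (gl n l') y = Fq n m (gl n l) (y - d%:Z)) ->
  equivX n m (l, k) (l', k + d%:Z).
Proof.
move=> n0; elim=> [|d IH] l l' k X X' h.
  rewrite addr0 (inX_eq n0 X X') ?subr0 //; first by apply: rst_refl.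
  by move=> y; rewrite h subr0.
have l0 : nth 0%N l 0 = m.
  have a1 : Fq n m (gl n l) (0%:Z - 1) = (nth 0%N l 0)%:Z - m%:Z.
    rewrite Fq_pred // /gl /=; have -> : (n - 1 - n.-1 = 0)%N by lia. done.
  have a2 := Fq_mono (g_valid n0 X) (x := 0%:Z - d.+1%:Z) (y := 0%:Z - 1) ltac:(lia).
  have a3 : 0 <= Fq n m (gl n l') 0%:Z by rewrite Fq_nat // /gl.
  have a4 := inX_nth (p := 0%N) X n0.
  move: a2 a3; rewrite -h a1; lia.
apply: rst_trans (_ : equivX n m (l, k) (lbar l, k + 1)) _.
  by apply: rst_step; split.
have -> : k + d.+1%:Z = (k + 1) + d%:Z by lia.
apply: IH => //; first by apply: inX_lbar.
by move=> y; rewrite Fq_lbar // h; congr Fq; lia.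
Qed.

Lemma part2 n m l l' k k' : (0 < n)%N -> inX n m l -> inX n m l' -> xk n m l k = xk n m l' k' ->
  equivX n m (l, k) (l', k').
Proof.
move=> n0 X X' e.
have h : forall y, Fq n m (gl n l) (y + k) = Fq n m (gl n l') (y + k').
  move=> y; set r := absz (y %% n)%Z; set q := (y %/ n)%Z.
  have hr : (r < n)%N by apply: modz_lt.
  have ey : y = r%:Z + n%:Z * q by apply: split_y.
  have : (xk n m l k).1 (Ordinal hr) = (xk n m l' k').1 (Ordinal hr) by rewrite e.
  rewrite !xk1 //= => /addrI /mulfI h0.
  have nz : n%:Z != 0 by rewrite eqz_nat; lia.
  have {}h0 := h0 nz.
  rewrite ey; have -> : r%:Z + n%:Z * q + k = (r%:Z + k) + n%:Z * q by ring.
  have -> : r%:Z + n%:Z * q + k' = (r%:Z + k') + n%:Z * q by ring.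
  by rewrite !Fq_shift // h0.
case: (lerP k k') => hk.
  have -> : k' = k + (absz (k' - k))%:Z by lia.
  apply: chain => // y; have := h (y - k'); rewrite subrK => <-; congr Fq; lia.
apply: rst_sym.
have -> : k = k' + (absz (k - k'))%:Z by lia.
apply: chain => // y; have := h (y - k); rewrite subrK => ->; congr Fq; lia.
Qed.

Lemma inX_nseq n m : inX n m (nseq n 0%N).
Proof.
apply/and3P; split; first by rewrite size_nseq.
- by elim: n => //= -[|n] //= ->; rewrite andbT.
- by apply/allP => x /nseqP [-> _].
Qed.

Lemma xk_0 n m l : xk n m l 0 = xpart n m l.
Proof.
rewrite /xk oppr0 /=; case: (xpart n m l) => a b /=; rewrite /addm /=.
by congr pair; apply/ffunP => x; rewrite ffunE mul0r addr0.
Qed.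

Lemma orbit_V n m (L : sv n m) : (0 < n)%N -> (0 < m)%N -> coprime m n ->
  in_Tiso_orbit L -> exists al be, Vdata L al be.
Proof.
move=> n0 m0 cop h.
have : exists al be, Vdata (Lambda0 n m) al be.
  have := xk_V 0 n0 m0 (inX_nseq n m); rewrite xk_0 => V; by do 2 eexists; exact: V.
elim: h.
- move=> x y st [al [be V]]; exact: (tau_V n0 m0 cop V st).
- by [].
- by move=> x y z _ IH1 _ IH2 /IH1 /IH2.
Qed.

Theorem theorem4p14 (n m : nat) :
  (0 < n)%N -> (n < m)%N -> coprime m n ->
  (forall (l : seq nat) (k : int),
      inX n m l -> nth 0%N l 0 = m ->
      xk n m (lbar l) (k + 1)%R = xk n m l k) /\
  (forall (l l' : seq nat) (k k' : int),
      inX n m l -> inX n m l' -> xk n m l k = xk n m l' k' ->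
      equivX n m (l, k) (l', k')) /\
  (forall L : sv n m,
      @in_Tiso_orbit n m L <-> exists (l : seq nat) (k : int), inX n m l /\ xk n m l k = L).
Proof.
move=> n0 nm cop; have m0 : (0 < m)%N by lia.
split; first by move=> l k; apply: part1.
split; first by move=> l l' k k'; apply: part2.
move=> L; split.
  move=> /(orbit_V n0 m0 cop) [al [be V]]; exact: V_x V.
move=> [l [k [X <-]]]; exact: reach (xk_V k n0 m0 X).
Qed.
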